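(* Let $A,B\subseteq\mathbb{N}$ with $A\in\mathcal{D}$ and $A\cap B=\emptyset$. Then $\underline{\underline{d}}(A\cup B)=d(A)+\underline{\underline{d}}(B)$.
   Context: $\mathbb{N}=\{1,2,3,\dots\}$. For $A\subseteq\mathbb{N}$ let $A(n)=|A\cap[1,n]|$. Let $\mathcal{D}$ be the collection of all $A\subseteq\mathbb{N}$ for which the asymptotic density $d(A)=\lim_{n\to\infty}\frac{A(n)}{n}$ exists. Define $\underline{\underline{d}}(A)=\sup\{d(B);\ B\subseteq A,\ B\in\mathcal{D}\}$. *)

(* Defs.v *)
(* reals R with Coquelicot limits. Subsets of N = {1,2,...} are
   predicates on nat; only elements in [1,n] are counted, so the value at 0 is irrelevant. *)
From Stdlib Require Import Reals ClassicalEpsilon.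
From Coquelicot Require Import Coquelicot.
Open Scope R_scope.

Definition nset := nat -> Prop.

Definition ind (A : nset) (k : nat) : R :=
  if excluded_middle_informative (A k) then 1 else 0.

Fixpoint count (A : nset) (n : nat) : R :=
  match n with
  | O => 0
  | S m => count A m + ind A (S m)
  end.

Definition has_density (A : nset) (d : R) : Prop :=
  is_lim_seq (fun n => count A n / INR n) d.

Definition in_D (A : nset) : Prop := exists d, has_density A d.

(* d(A) (meaningful when A ∈ 𝒟) *)
Definition dens (A : nset) : R := real (Lim_seq (fun n => count A n / INR n)).

Definition subset (B A : nset) : Prop := forall k, B k -> A k.

(* lower-lower density: sup { d(B) : B ⊆ A, B ∈ 𝒟 } (the set is nonempty, contains 0,
   and is bounded by 1, so the supremum is a finite real) *)
Definition ddl (A : nset) : R :=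
  real (Lub_Rbar (fun x => exists B, subset B A /\ has_density B x)).

(* Main.v *)
From Pilot Require Import Defs.
From Stdlib Require Import Reals Lra Lia ZArith ClassicalEpsilon.
From Coquelicot Require Import Coquelicot.
Open Scope R_scope.
Import Pilot.Defs.

Lemma nat_unbounded (r : R) : exists N : nat, r < INR N.
Proof.
  destruct (archimed r) as [H1 _].
  destruct (Z_le_gt_dec 0 (up r)) as [Hz|Hz].
  - exists (Z.to_nat (up r)). rewrite INR_IZR_INZ, Z2Nat.id by lia; lra.
  - exists 0%nat. simpl. apply Z.gt_lt in Hz. apply IZR_lt in Hz. lra.
Qed.

Lemma ind_bounds (X : nset) k : 0 <= ind X k <= 1.
Proof. unfold ind; destruct (excluded_middle_informative _); lra. Qed.

Lemma count_bounds (X : nset) n : 0 <= count X n <= INR n.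
Proof.
  induction n; simpl count. simpl; lra.
  rewrite S_INR. pose proof (ind_bounds X (S n)); lra.
Qed.

Lemma dens_bounds (C : nset) x : has_density C x -> 0 <= x <= 1.
Proof.
  intros H. split.
  - assert (Rbar_le 0 x) as Hl; [|exact Hl].
    apply (is_lim_seq_le (fun _ => 0) (fun n => count C n / INR n)); auto.
    + intros n. destruct n. simpl. unfold Rdiv. lra.
      pose proof (count_bounds C (S n)). pose proof (lt_0_INR (S n) ltac:(lia)).
      apply Rdiv_le_0_compat; lra.
    + apply is_lim_seq_const.
  - assert (Rbar_le x 1) as Hl; [|exact Hl].
    apply (is_lim_seq_le (fun n => count C n / INR n) (fun _ => 1)); auto.
    + intros n. destruct n. simpl. unfold Rdiv. lra.
      pose proof (count_bounds C (S n)). pose proof (lt_0_INR (S n) ltac:(lia)).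
      apply (Rmult_le_reg_r (INR (S n))); [lra|]; unfold Rdiv; rewrite Rmult_assoc, Rinv_l, Rmult_1_r by lra; lra.
    + apply is_lim_seq_const.
Qed.

Lemma dens_empty : has_density (fun _ => False) 0.
Proof.
  apply (is_lim_seq_ext (fun _ => 0)). 2: apply is_lim_seq_const.
  intros n. assert (count (fun _ => False) n = 0).
  { induction n; simpl; auto. rewrite IHn. unfold ind.
    destruct (excluded_middle_informative False); [contradiction|lra]. }
  rewrite H. unfold Rdiv. ring.
Qed.

Definition PS (X : nset) := fun x => exists B, subset B X /\ has_density B x.

Lemma ddl_fin X : exists r, Lub_Rbar (PS X) = Finite r.
Proof.
  destruct (Lub_Rbar_correct (PS X)) as [Hub Hlub].
  assert (H0 : PS X 0). { exists (fun _ => False). split. intros k []. apply dens_empty. }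
  pose proof (Hub 0 H0) as Ha.
  assert (Hb : Rbar_le (Lub_Rbar (PS X)) 1).
  { apply Hlub. intros x [C [_ HC]]. simpl. apply (dens_bounds C x HC). }
  destruct (Lub_Rbar (PS X)) as [r| |]; simpl in *; try contradiction. eauto.
Qed.

Lemma ddl_ub X x : PS X x -> x <= ddl X.
Proof.
  intros Hx. unfold ddl. fold (PS X). destruct (ddl_fin X) as [r Hr]. rewrite Hr. simpl.
  destruct (Lub_Rbar_correct (PS X)) as [Hub _]. specialize (Hub x Hx). rewrite Hr in Hub. exact Hub.
Qed.

Lemma ddl_lub X M : (forall x, PS X x -> x <= M) -> ddl X <= M.
Proof.
  intros HM. unfold ddl. fold (PS X). destruct (ddl_fin X) as [r Hr]. rewrite Hr. simpl.
  destruct (Lub_Rbar_correct (PS X)) as [_ Hlub].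
  assert (Rbar_le (Lub_Rbar (PS X)) M) as H. { apply Hlub. intros x Hx. simpl. auto. }
  rewrite Hr in H. exact H.
Qed.

Lemma ddl_ge0 X : 0 <= ddl X.
Proof. apply ddl_ub. exists (fun _ => False). split. intros k []. apply dens_empty. Qed.

Lemma count_union (A C : nset) n : (forall k, A k -> C k -> False) ->
  count (fun k => A k \/ C k) n = count A n + count C n.
Proof.
  intros Hd. induction n; simpl. lra. rewrite IHn. unfold ind.
  destruct (excluded_middle_informative (A (S n) \/ C (S n))) as [[h|h]|h];
  destruct (excluded_middle_informative (A (S n))); destruct (excluded_middle_informative (C (S n)));
  try tauto; try lra; exfalso; eauto.
Qed.

Lemma err_bound (f : nat -> R) (c : R) : (forall n, 0 <= f n <= INR n) ->
  is_lim_seq (fun n => f n / INR n) c ->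
  forall eps, 0 < eps -> exists N, (1 <= N)%nat /\ forall n m, (N <= n)%nat -> (m <= n)%nat ->
     Rabs (f m - c * INR m) <= eps * INR n.
Proof.
  intros Hf Hl eps Heps. pose proof (proj1 (is_lim_seq_Reals _ c) Hl) as Hl0; clear Hl; rename Hl0 into Hl.
  destruct (Hl eps Heps) as [N1 HN1].
  destruct (nat_unbounded (INR (S N1) * (1 + Rabs c) / eps)) as [N2 HN2].
  exists (S N1 + N2)%nat. split. lia. intros n m Hn Hm.
  assert (HnN : INR (S N1 + N2) <= INR n) by (apply le_INR; lia).
  rewrite plus_INR in HnN.
  assert (Hk : INR (S N1) * (1 + Rabs c) <= eps * INR N2).
  { apply Rmult_lt_compat_l with (r := eps) in HN2; auto.
    unfold Rdiv in HN2. rewrite <- Rmult_assoc, (Rmult_comm eps), Rmult_assoc, Rinv_r, Rmult_1_r in HN2; lra. }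
  pose proof (pos_INR N2). pose proof (pos_INR (S N1)).
  destruct (le_lt_dec (S N1) m) as [Hbig|Hsmall].
  - specialize (HN1 m ltac:(lia)). unfold R_dist in HN1.
    assert (Hm0 : 0 < INR m) by (apply lt_0_INR; lia).
    assert (f m - c * INR m = INR m * (f m / INR m - c)) as ->.
    { field. lra. }
    rewrite Rabs_mult, Rabs_pos_eq by lra.
    assert (INR m <= INR n) by (apply le_INR; lia).
    assert (0 <= Rabs (f m / INR m - c)) by apply Rabs_pos.
    nra.
  - assert (Hmle : INR m <= INR (S N1)) by (apply le_INR; lia).
    pose proof (Hf m). pose proof (pos_INR m). pose proof (Rabs_pos c).
    apply Rle_trans with (INR (S N1) * (1 + Rabs c)).
    + apply Rabs_le_between. split.
      * destruct (Rle_dec 0 c). rewrite Rabs_pos_eq in * by lra. nra.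
        rewrite Rabs_left in * by lra. nra.
      * destruct (Rle_dec 0 c). rewrite Rabs_pos_eq in * by lra. nra.
        rewrite Rabs_left in * by lra. nra.
    + nra.
Qed.

Fixpoint gc (C A : nset) (t : R) (n : nat) : R :=
  match n with
  | O => 0
  | S j => gc C A t j +
      (if excluded_middle_informative (C (S j) /\ ~ A (S j) /\ gc C A t j + 1 <= t * INR (S j))
       then 1 else 0)
  end.

Definition GS (C A : nset) (t : R) : nset := fun k =>
  match k with
  | O => False
  | S j => C (S j) /\ ~ A (S j) /\ gc C A t j + 1 <= t * INR (S j)
  end.

Lemma count_GS C A t n : count (GS C A t) n = gc C A t n.
Proof. induction n; simpl. reflexivity. rewrite IHn. reflexivity. Qed.

Lemma gc_S C A t j : gc C A t (S j) = gc C A t j +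
      (if excluded_middle_informative (C (S j) /\ ~ A (S j) /\ gc C A t j + 1 <= t * INR (S j))
       then 1 else 0).
Proof. reflexivity. Qed.

Lemma gc_upper C A t n : 0 <= t -> gc C A t n <= t * INR n.
Proof.
  intros Ht. induction n. simpl; lra. rewrite gc_S.
  destruct (excluded_middle_informative _) as [[_ [_ h]]|h]. exact h.
  rewrite S_INR. nra.
Qed.

Lemma gc_lower C A t n : exists m, (m <= n)%nat /\
  t * INR m - 1 + (count (fun k => C k /\ ~ A k) n - count (fun k => C k /\ ~ A k) m) <= gc C A t n.
Proof.
  induction n.
  - exists 0%nat. split. lia. simpl. lra.
  - destruct IHn as [m [Hm H]]. rewrite gc_S. simpl count at 1.
    unfold ind at 1.
    destruct (excluded_middle_informative (C (S n) /\ ~ A (S n) /\ gc C A t n + 1 <= t * INR (S n))) as [h|h];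
    destruct (excluded_middle_informative (C (S n) /\ ~ A (S n))) as [h'|h'].
    + exists m. split. lia. lra.
    + exfalso; tauto.
    + exists (S n). split. lia.
      assert (~ gc C A t n + 1 <= t * INR (S n)) by tauto.
      simpl count. unfold ind at 1.
      destruct (excluded_middle_informative (C (S n) /\ ~ A (S n))); [|tauto]. lra.
    + exists m. split. lia. lra.
Qed.

Lemma count_diff (C A : nset) m d :
  (count C (m + d) - count C m) - (count A (m + d) - count A m)
  <= count (fun k => C k /\ ~ A k) (m + d) - count (fun k => C k /\ ~ A k) m.
Proof.
  induction d. rewrite Nat.add_0_r. lra.
  rewrite Nat.add_succ_r. simpl count. unfold ind.
  destruct (excluded_middle_informative (C (S (m + d)) /\ ~ A (S (m + d))));
  destruct (excluded_middle_informative (C (S (m + d))));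
  destruct (excluded_middle_informative (A (S (m + d)))); try tauto; lra.
Qed.

Lemma greedy_density (C A : nset) (c a : R) :
  has_density C c -> has_density A a -> 0 <= c - a ->
  has_density (GS C A (c - a)) (c - a).
Proof.
  intros HC HA Ht. set (t := c - a) in *.
  unfold has_density. apply is_lim_seq_Reals. intros eps Heps.
  destruct (err_bound (count C) c (count_bounds C) HC (eps/8) ltac:(lra)) as [N1 [HN1a HN1]].
  destruct (err_bound (count A) a (count_bounds A) HA (eps/8) ltac:(lra)) as [N2 [HN2a HN2]].
  destruct (nat_unbounded (4 / eps)) as [N3 HN3].
  exists (N1 + N2 + N3)%nat. intros n Hn.
  assert (HnN : INR N3 <= INR n) by (apply le_INR; lia).
  assert (Hn0 : 0 < INR n) by (apply lt_0_INR; lia).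
  rewrite count_GS. unfold R_dist.
  pose proof (gc_upper C A t n Ht) as Hup.
  destruct (gc_lower C A t n) as [m [Hm Hlo]].
  pose proof (count_diff C A m (n - m)) as Hd. replace (m + (n - m))%nat with n in Hd by lia.
  pose proof (HN1 n m ltac:(lia) Hm) as E1. pose proof (HN1 n n ltac:(lia) (le_n n)) as E2.
  pose proof (HN2 n m ltac:(lia) Hm) as E3. pose proof (HN2 n n ltac:(lia) (le_n n)) as E4.
  apply Rabs_le_between in E1, E2, E3, E4.
  assert (Hlo' : t * INR n - 1 - eps / 2 * INR n <= gc C A t n).
  { unfold t in *. lra. }
  assert (H4 : 4 <= eps * INR n).
  { apply Rmult_lt_compat_l with (r := eps) in HN3; auto.
    unfold Rdiv in HN3. rewrite <- Rmult_assoc, (Rmult_comm eps), Rmult_assoc, Rinv_r, Rmult_1_r in HN3; nra. }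
  set (g := gc C A t n) in *.
  assert (Hi : INR n * / INR n = 1) by (field; lra).
  assert (Hip : 0 < / INR n) by (apply Rinv_0_lt_compat; lra).
  assert (g / INR n <= t).
  { unfold Rdiv. assert ((t * INR n - g) * / INR n >= 0) by (apply Rle_ge, Rmult_le_pos; lra). nra. }
  assert (t - 3 * eps / 4 <= g / INR n).
  { unfold Rdiv. assert ((g - (t * INR n - 1 - eps / 2 * INR n)) * / INR n >= 0) by (apply Rle_ge, Rmult_le_pos; lra).
    assert ((eps * INR n - 4) * / INR n >= 0) by (apply Rle_ge, Rmult_le_pos; lra). nra. }
  apply Rabs_def1; lra.
Qed.

Theorem lemma3p9 (A B : nset) :
  in_D A ->
  (forall k, A k -> B k -> False) ->
  ddl (fun k => A k \/ B k) = dens A + ddl B.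
Proof.
  intros [a HA] Hdis.
  assert (Hda : dens A = a).
  { unfold dens. unfold has_density in HA. rewrite (is_lim_seq_unique _ _ HA). reflexivity. }
  rewrite Hda. apply Rle_antisym.
  - apply ddl_lub. intros c [C [HCs HC]].
    destruct (Rle_dec (c - a) 0) as [h|h].
    + pose proof (ddl_ge0 B). lra.
    + assert (c - a <= ddl B); [|lra].
      apply ddl_ub. exists (GS C A (c - a)). split.
      * intros k Hk. destruct k; simpl in Hk. contradiction.
        destruct Hk as [h1 [h2 _]]. destruct (HCs _ h1); tauto.
      * apply greedy_density; auto; lra.
  - assert (ddl B <= ddl (fun k => A k \/ B k) - a); [|lra].
    apply ddl_lub. intros x [C [HCs HC]].
    assert (a + x <= ddl (fun k => A k \/ B k)); [|lra].
    apply ddl_ub. exists (fun k => A k \/ C k). split.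
    + intros k [h|h]; auto.
    + unfold has_density.
      apply (is_lim_seq_ext (fun n => count A n / INR n + count C n / INR n)).
      * intros n. rewrite count_union. unfold Rdiv. ring. intros k h1 h2. eauto.
      * apply is_lim_seq_plus'; auto.
Qed.
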